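(* Let $p\in\mathcal{X}$. If $q_1,q_2\in\mathcal{X}$ are two pathless polynomials with $p\equiv q_1\pmod{\mathcal{J}}$ and $p\equiv q_2\pmod{\mathcal{J}}$, then $D(q_1)=D(q_2)$. In other words, for pathless $q$ with $p\equiv q\pmod{\mathcal J}$, the value $D(q)$ depends only on $\alpha$, $\beta$ and $p$, not on the choice of $q$.
   Context: Let $\mathbf{k}$ be a commutative ring, let $\beta,\alpha\in\mathbf{k}$, and let $n$ be a positive integer; write $[m]=\{1,2,\dots,m\}$. Let $\mathcal{X}=\mathbf{k}[x_{i,j}\mid 1\le i<j\le n]$ be the polynomial ring over $\mathbf{k}$ in the $n(n-1)/2$ indeterminates $x_{i,j}$, and let $\mathfrak{M}$ be the set of monomials (without coefficients) in these indeterminates. Let $\mathcal{J}$ be the ideal of $\mathcal{X}$ generated by all elements $x_{i,j}x_{j,k}-x_{i,k}(x_{i,j}+x_{j,k}+\beta)-\alpha$ for $1\le i<j<k\le n$. A monomial $\mathfrak{m}\in\mathfrak{M}$ is pathless if there is no triple $(i,j,k)$ with $1\le i<j<k\le n$ and $x_{i,j}x_{j,k}\mid\mathfrak{m}$. A polynomial in $\mathcal{X}$ is pathless if it is a $\mathbf{k}$-linear combination of pathless monomials. Let $\mathcal{T}'=\mathbf{k}[t_1,\dots,t_{n-1}]$ and let $D:\mathcal{X}\to\mathcal{T}'$ be the $\mathbf{k}$-algebra homomorphism with $D(x_{i,j})=t_i$ for all $1\le i<j\le n$. *)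

(* Defs.v *)
From HB Require Import structures.
From mathcomp Require Import all_boot all_order all_algebra.
Set Implicit Arguments. Unset Strict Implicit. Unset Printing Implicit Defensive.
Import GRing.Theory.
Local Open Scope ring_scope.

Definition fpoly (k : Type) (M : Type) := seq (k * M).

Definition pcoef (k : pzSemiRingType) (M : eqType) (p : fpoly k M) (m : M) : k :=
  \sum_(t <- p | t.2 == m) t.1.

(* the indeterminates x_{i,j}, 1 <= i < j <= n (0-based: i < j < n) *)
Definition var (n : nat) := {ij : 'I_n * 'I_n | (ij.1 < ij.2)%N}.

Definition mon (n : nat) := {ffun var n -> nat}.

Definition xpoly (k : Type) (n : nat) := fpoly k (mon n).

Definition mon1 (n : nat) : mon n := [ffun => 0%N].
Definition monM (n : nat) (m1 m2 : mon n) : mon n := [ffun v => (m1 v + m2 v)%N].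
Definition monX (n : nat) (v : var n) : mon n := [ffun w => (w == v : nat)].

Section Ops.
Variables (k : comPzRingType) (n : nat).
Definition pC (c : k) : xpoly k n := [:: (c, mon1 n)].
Definition pAdd (p q : xpoly k n) : xpoly k n := p ++ q.
Definition pOpp (p : xpoly k n) : xpoly k n := [seq (- t.1, t.2) | t <- p].
Definition pSub (p q : xpoly k n) : xpoly k n := pAdd p (pOpp q).
Definition pMul (p q : xpoly k n) : xpoly k n :=
  [seq (a.1 * b.1, monM a.2 b.2) | a <- p, b <- q].
(* the variable x_{i,j} (for i < j; zero otherwise, never used then) *)
Definition xv (i j : 'I_n) : xpoly k n :=
  if @insub _ (fun ij : 'I_n * 'I_n => (ij.1 < ij.2)%N) (var n) (i, j) is Some v
  then [:: (1, monX v)] else [::].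

Definition genJ (beta alpha : k) (i j l : 'I_n) : xpoly k n :=
  pSub (pSub (pMul (xv i j) (xv j l))
             (pMul (xv i l) (pAdd (pAdd (xv i j) (xv j l)) (pC beta))))
       (pC alpha).

Definition inJ (beta alpha : k) (r : xpoly k n) : Prop :=
  exists s : seq (xpoly k n * ('I_n * 'I_n * 'I_n)),
    all (fun t : xpoly k n * ('I_n * 'I_n * 'I_n) => (t.2.1.1 < t.2.1.2)%N && (t.2.1.2 < t.2.2)%N) s /\
    forall m : mon n,
      pcoef r m =
      pcoef (flatten [seq pMul t.1 (genJ beta alpha t.2.1.1 t.2.1.2 t.2.2) | t : xpoly k n * ('I_n * 'I_n * 'I_n) <- s]) m.

Definition congJ (beta alpha : k) (p q : xpoly k n) : Prop := inJ beta alpha (pSub p q).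

(* exponent of x_{i,j} in m (0 if not i < j) *)
Definition expo (m : mon n) (i j : 'I_n) : nat :=
  if @insub _ (fun ij : 'I_n * 'I_n => (ij.1 < ij.2)%N) (var n) (i, j) is Some v
  then m v else 0%N.

Definition pathless_mon (m : mon n) : Prop :=
  forall i j l : 'I_n, (i < j)%N -> (j < l)%N ->
    ~ ((0 < expo m i j)%N /\ (0 < expo m j l)%N).

Definition pathless (q : xpoly k n) : Prop :=
  forall m : mon n, pcoef q m != 0 -> pathless_mon m.

(* T' = k[t_1, ..., t_{n-1}]; 0-based t_0..t_{n-2} *)
Definition tmon := {ffun 'I_n.-1 -> nat}.

(* D(x_{i,j}) = t_i, extended multiplicatively on monomials *)
Definition Dmon (m : mon n) : tmon :=
  [ffun a : 'I_n.-1 => \sum_(v : var n | nat_of_ord (sval v).1 == nat_of_ord a) m v].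

Definition Dpoly (q : xpoly k n) : fpoly k tmon := [seq (t.1, Dmon t.2) | t <- q].
End Ops.

(* Main.v *)
Require Import Defs.
From HB Require Import structures.
From mathcomp Require Import all_boot all_order all_algebra.
From mathcomp Require Import mpoly.
From mathcomp Require Import ring.
From mathcomp Require Import zify.
Import Order.TTheory GRing.Theory Num.Theory.
Local Open Scope ring_scope.


Section ListLemmas.
Variables (k : comPzRingType) (M : eqType).

Lemma pcoef_cons (t : k * M) (p : fpoly k M) m :
  pcoef (t :: p) m = (if t.2 == m then t.1 else 0) + pcoef p m.
Proof. by rewrite /pcoef big_cons; case: ifP; rewrite ?add0r. Qed.

Lemma pcoef_nil m : pcoef ([::] : fpoly k M) m = 0.
Proof. by rewrite /pcoef big_nil. Qed.

Lemma sum_pcoef (p : fpoly k M) (F : M -> k) (S : seq M) :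
  uniq S -> {subset map snd p <= S} ->
  \sum_(t <- p) t.1 * F t.2 = \sum_(m <- S) pcoef p m * F m.
Proof.
move=> uS; elim: p => [|t p IH] sub.
  by rewrite big_nil big1 // => m _; rewrite pcoef_nil mul0r.
rewrite big_cons IH; last by move=> x xp; apply: sub; rewrite inE xp orbT.
under [RHS]eq_bigr do rewrite pcoef_cons mulrDl.
rewrite big_split /=; congr (_ + _).
have tS : t.2 \in S by apply: sub; rewrite inE eqxx.
rewrite (bigD1_seq t.2) //= eqxx big1 ?addr0 // => m /negbTE.
by rewrite eq_sym => ->; rewrite mul0r.
Qed.

Lemma sum_pcoef_eq (p q : fpoly k M) (F : M -> k) :
  (forall m, pcoef p m = pcoef q m) ->
  \sum_(t <- p) t.1 * F t.2 = \sum_(t <- q) t.1 * F t.2.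
Proof.
move=> E; set S := undup (map snd p ++ map snd q).
have uS : uniq S by rewrite undup_uniq.
have sp : {subset map snd p <= S} by move=> x xp; rewrite mem_undup mem_cat xp.
have sq : {subset map snd q <= S} by move=> x xp; rewrite mem_undup mem_cat xp orbT.
rewrite (sum_pcoef p F S uS sp) (sum_pcoef q F S uS sq).
by apply: eq_bigr => m _; rewrite E.
Qed.

End ListLemmas.

Section Lin.
Variables (k : comPzRingType) (n : nat).
Implicit Types (p q : xpoly k n) (F G : mon n -> k).

Definition Lin F p : k := \sum_(t <- p) t.1 * F t.2.

Lemma Lin_add F p q : Lin F (pAdd p q) = Lin F p + Lin F q.
Proof. by rewrite /Lin /pAdd big_cat. Qed.

Lemma Lin_opp F p : Lin F (pOpp p) = - Lin F p.
Proof. by rewrite /Lin /pOpp big_map -sumrN; apply: eq_bigr => t _; rewrite mulNr. Qed.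

Lemma Lin_sub F p q : Lin F (pSub p q) = Lin F p - Lin F q.
Proof. by rewrite /pSub Lin_add Lin_opp. Qed.

Lemma Lin_flatten F (L : seq (xpoly k n)) : Lin F (flatten L) = \sum_(x <- L) Lin F x.
Proof.
elim: L => [|x L IH]; first by rewrite big_nil /Lin big_nil.
by rewrite big_cons -IH /Lin -big_cat.
Qed.

Lemma Lin_mul F p q :
  Lin F (pMul p q) = \sum_(a <- p) a.1 * \sum_(b <- q) b.1 * F (monM a.2 b.2).
Proof.
rewrite /Lin /pMul big_allpairs_dep; apply: eq_bigr => a _.
by rewrite mulr_sumr; apply: eq_bigr => b _ /=; rewrite mulrA.
Qed.

Lemma Lin_eq F p q : (forall m, pcoef p m = pcoef q m) -> Lin F p = Lin F q.
Proof. exact: sum_pcoef_eq. Qed.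

Lemma pcoef_Dpoly q u : pcoef (Dpoly q) u = Lin (fun m => (Dmon m == u)%:R) q.
Proof.
rewrite /pcoef /Dpoly big_map big_mkcond /Lin; apply: eq_bigr => t _ /=.
by case: ifP => _; rewrite ?mulr1 ?mulr0.
Qed.

Lemma Lin_pathless F G q : pathless q -> (forall m, pathless_mon m -> F m = G m) ->
  Lin F q = Lin G q.
Proof.
move=> pq FG; set S := undup (map snd q).
have uS : uniq S by rewrite undup_uniq.
have sq : {subset map snd q <= S} by move=> x xp; rewrite mem_undup.
rewrite /Lin (@sum_pcoef k _ q F S uS sq) (@sum_pcoef k _ q G S uS sq).
apply: eq_bigr => m _; have [->|nz] := eqVneq (pcoef q m) 0; first by rewrite !mul0r.
by rewrite FG //; apply: pq.
Qed.

Lemma xvE (i j : 'I_n) (h : (i < j)%N) :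
  xv k i j = [:: (1, monX (exist (fun ij : 'I_n * 'I_n => (ij.1 < ij.2)%N) (i, j) h))].
Proof. by rewrite /xv insubT. Qed.

Lemma Lin_genJ F (beta alpha : k) (i j l : 'I_n) (hij : (i < j)%N) (hjl : (j < l)%N) (hil : (i < l)%N) :
  let vij := exist (fun ij : 'I_n * 'I_n => (ij.1 < ij.2)%N) (i, j) hij in
  let vjl := exist (fun ij : 'I_n * 'I_n => (ij.1 < ij.2)%N) (j, l) hjl in
  let vil := exist (fun ij : 'I_n * 'I_n => (ij.1 < ij.2)%N) (i, l) hil in
  Lin F (genJ beta alpha i j l) =
    F (monM (monX vij) (monX vjl)) - F (monM (monX vil) (monX vij))
    - F (monM (monX vil) (monX vjl)) - beta * F (monM (monX vil) (mon1 n))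
    - alpha * F (mon1 n).
Proof.
move=> vij vjl vil.
rewrite /genJ !Lin_sub !Lin_mul (xvE _ _ hij) (xvE _ _ hjl) (xvE _ _ hil) /pAdd /pC /Lin /=.
rewrite !big_cons !big_nil /=; ring.
Qed.

End Lin.
Arguments Lin {k n}.


Lemma key_abs (R : comRingType) (I : R -> Prop)
  (ID : forall x y, I x -> I y -> I (x + y)) (IN : forall x, I x -> I (- x))
  (IM : forall x y, I x -> I (y * x))
  (a b c beta alpha Ga Gb Gab aN bN abN Ti Tj Tl pij pjl pil : R)
  (ha : (1 - a) * Ga = 1 - aN) (hb : (1 - b) * Gb = 1 - bN)
  (hab : (1 - a * b) * Gab = 1 - abN)
  (Ia : I aN) (Ib : I bN) (Iab : I abN)
  (eTi : Ti = a * b * c) (eTj : Tj = b * c) (eTl : Tl = c)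
  (eij : pij = Ti * Tj + (Ti * Ti + beta * Ti + alpha) * Ga)
  (ejl : pjl = Tj * Tl + (Tj * Tj + beta * Tj + alpha) * Gb)
  (eil : pil = Ti * Tl + (Ti * Ti + beta * Ti + alpha) * Gab) :
  I (pij * pjl - pil * pij - pil * pjl * b - beta * pil * Tj - alpha * (Tj * Tl)).
Proof.
set E := (X in I X).
set y1 := Ti * Tj * (1 - a) + (Ti * Ti + beta * Ti + alpha).
set y2 := Tj * Tl * (1 - b) + (Tj * Tj + beta * Tj + alpha).
set y3 := Ti * Tl * (1 - a * b) + (Ti * Ti + beta * Ti + alpha).
set e1 := (Ti * Ti + beta * Ti + alpha) * aN.
set e2 := (Tj * Tj + beta * Tj + alpha) * bN.
set e3 := (Ti * Ti + beta * Ti + alpha) * abN.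
have d1 : pij * (1 - a) = y1 - e1.
  rewrite eij; transitivity (Ti * Tj * (1 - a) + (Ti * Ti + beta * Ti + alpha) * ((1 - a) * Ga)).
    by ring.
  by rewrite ha /y1 /e1; ring.
have d2 : pjl * (1 - b) = y2 - e2.
  rewrite ejl; transitivity (Tj * Tl * (1 - b) + (Tj * Tj + beta * Tj + alpha) * ((1 - b) * Gb)).
    by ring.
  by rewrite hb /y2 /e2; ring.
have d3 : pil * (1 - a * b) = y3 - e3.
  rewrite eil; transitivity (Ti * Tl * (1 - a * b) + (Ti * Ti + beta * Ti + alpha) * ((1 - a * b) * Gab)).
    by ring.
  by rewrite hab /y3 /e3; ring.
have ED : E * ((1 - a) * (1 - b) * (1 - a * b)) =
   e1 * (- y2 * (1 - a * b) + (y3 - e3) * (1 - b))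
 + e2 * (- (y1 - e1) * (1 - a * b) + (y3 - e3) * ((1 - a) * b))
 + e3 * (y1 * (1 - b) + y2 * ((1 - a) * b) + beta * (1 - a) * (1 - b) * Tj).
  transitivity ((pij * (1 - a)) * (pjl * (1 - b)) * (1 - a * b)
     - (pil * (1 - a * b)) * (pij * (1 - a)) * (1 - b)
     - (pil * (1 - a * b)) * (pjl * (1 - b)) * ((1 - a) * b)
     - beta * (pil * (1 - a * b)) * (1 - a) * (1 - b) * Tj
     - alpha * (Tj * Tl) * ((1 - a) * (1 - b) * (1 - a * b))).
    by rewrite /E; ring.
  rewrite d1 d2 d3 /y1 /y2 /y3 /e1 /e2 /e3 eTi eTj eTl; ring.
have IED : I (E * ((1 - a) * (1 - b) * (1 - a * b))).
  by rewrite ED; apply ID; [apply ID|]; rewrite mulrC; apply IM; rewrite /e1 /e2 /e3; apply IM.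
clearbody E.
have -> : E = (E * ((1 - a) * (1 - b) * (1 - a * b))) * (Ga * Gb * Gab)
    - E * (((1 - a) * Ga) * ((1 - b) * Gb) * ((1 - a * b) * Gab) - 1) by ring.
rewrite ha hb hab.
have -> : (1 - aN) * (1 - bN) * (1 - abN) - 1 = - (aN * ((1 - bN) * (1 - abN)) + bN * (1 - abN) + abN) by ring.
apply ID; first by rewrite mulrC; apply IM.
apply IN; rewrite mulrN; apply IN; apply IM.
by apply ID; [apply ID|]; rewrite // mulrC; apply IM.
Qed.


Section Model.
Variables (k : comNzRingType) (beta alpha : k) (n N : nat).
Local Notation MP := {mpoly k[n]}.

Definition mT (v : 'I_n) : 'X_{1..n} := [multinom ((v <= w)%N : nat) | w < n].
Definition mA (i j : 'I_n) : 'X_{1..n} := [multinom (((i <= w) && (w < j))%N : nat) | w < n].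

Lemma mT_split (i j : 'I_n) : (i <= j)%N -> mT i = (mA i j + mT j)%MM.
Proof.
move=> ij; apply/mnmP => w; rewrite mnmDE !mnmE.
case: (leqP j w) => jw; rewrite ?andbT ?andbF.
  by rewrite (leq_trans ij jw).
by rewrite addn0.
Qed.

Definition src (v : var n) : 'I_n := (sval v).1.
Definition snk (v : var n) : 'I_n := (sval v).2.
Lemma src_snk v : (src v < snk v)%N. Proof. exact: (svalP v). Qed.

Definition TT (v : 'I_n) : MP := 'X_[mT v].
Definition Pp (t : MP) : MP := t * t + beta%:MP * t + alpha%:MP.
Definition Gs (a : MP) : MP := \sum_(m < N) a ^+ m.
Definition psi (v : var n) : MP :=
  TT (src v) * TT (snk v) + Pp (TT (src v)) * Gs 'X_[mA (src v) (snk v)].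
Definition Psi (m : mon n) : MP := \prod_v psi v ^+ m v.
Definition mW (m : mon n) : 'X_{1..n} := (\sum_v (mT (snk v) *+ m v))%MM.
Definition mU (u : tmon n) : 'X_{1..n} :=
  (\sum_(a : 'I_n.-1) (mT (widen_ord (leq_pred n) a) *+ u a))%MM.
Definition Lam (u : tmon n) (m : mon n) : k := (Psi m)@_(mU u + mW m)%MM.

Lemma Psi_monM a b : Psi (monM a b) = Psi a * Psi b.
Proof.
rewrite /Psi -big_split /=; apply: eq_bigr => v _.
by rewrite /monM ffunE exprD.
Qed.

Lemma mW_monM a b : mW (monM a b) = (mW a + mW b)%MM.
Proof.
apply/mnmP => w; rewrite mnmDE /mW !mnm_sumE -big_split /=.
by apply: eq_bigr => v _; rewrite !mulmnE /monM ffunE mulnDr.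
Qed.

Lemma Psi_monX v : Psi (monX v) = psi v.
Proof.
rewrite /Psi (bigD1 v) //= big1 ?mulr1; first by rewrite ffunE eqxx expr1.
by move=> w /negbTE wv; rewrite ffunE wv expr0.
Qed.

Lemma mW_monX v : mW (monX v) = mT (snk v).
Proof.
apply/mnmP => w; rewrite /mW mnm_sumE (bigD1 v) //= big1 ?addn0.
  by rewrite mulmnE ffunE eqxx muln1.
by move=> x /negbTE xv; rewrite mulmnE ffunE xv muln0.
Qed.

Lemma Psi_mon1 : Psi (mon1 n) = 1.
Proof. by rewrite /Psi big1 // => v _; rewrite ffunE expr0. Qed.

Lemma mW_mon1 : mW (mon1 n) = 0%MM.
Proof.
by apply/mnmP => w; rewrite /mW mnm_sumE mnm0E big1 // => v _; rewrite mulmnE ffunE muln0.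
Qed.


Definition supp (P : 'X_{1..n} -> Prop) (p : MP) := forall mu, p@_mu != 0 -> P mu.

Lemma supp0 P : supp P 0.
Proof. by move=> mu; rewrite mcoeff0 eqxx. Qed.

Lemma suppD P p q : supp P p -> supp P q -> supp P (p + q).
Proof.
move=> hp hq mu; rewrite mcoeffD.
have [z|] := eqVneq (p@_mu) 0; last by move=> /hp.
by rewrite z add0r => /hq.
Qed.

Lemma suppN P p : supp P p -> supp P (- p).
Proof. by move=> hp mu; rewrite mcoeffN oppr_eq0 => /hp. Qed.

Lemma suppB P p q : supp P p -> supp P q -> supp P (p - q).
Proof. by move=> hp hq; apply: suppD => //; apply: suppN. Qed.

Lemma suppS (P Q : 'X_{1..n} -> Prop) p : (forall mu, P mu -> Q mu) -> supp P p -> supp Q p.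
Proof. by move=> PQ hp mu /hp /PQ. Qed.

Lemma suppM (P1 P2 P3 : 'X_{1..n} -> Prop) p q :
  (forall a b, P1 a -> P2 b -> P3 (a + b)%MM) -> supp P1 p -> supp P2 q -> supp P3 (p * q).
Proof.
move=> H hp hq mu; rewrite -mcoeff_msupp => /msuppM_le /allpairsP [[a b] /= [ha hb ->]].
by apply: H; [apply: hp | apply: hq]; rewrite -mcoeff_msupp.
Qed.

Lemma suppX (P : 'X_{1..n} -> Prop) mu : P mu -> supp P 'X_[mu].
Proof.
move=> h nu; rewrite mcoeffX; case: (@eqP _ mu nu) => [<-//|_].
by rewrite /= eqxx.
Qed.

Lemma suppC (P : 'X_{1..n} -> Prop) c : P 0%MM -> supp P c%:MP.
Proof.
move=> h nu; rewrite mcoeffC; case: (@eqP _ nu 0%MM) => [->//|_].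
by rewrite /= mulr0 eqxx.
Qed.

Lemma supp_sum (P : 'X_{1..n} -> Prop) (I : Type) (r : seq I) (Q : pred I) (F : I -> MP) :
  (forall i, Q i -> supp P (F i)) -> supp P (\sum_(i <- r | Q i) F i).
Proof. by move=> h; apply: big_ind => //; [exact: supp0 | exact: suppD]. Qed.

Definition hi := supp (fun mu => (N <= mdeg mu)%N).

Lemma hi_mull p q : hi p -> hi (q * p).
Proof.
move=> hp; apply: (@suppM (fun _ => True) (fun mu => (N <= mdeg mu)%N) (fun mu => (N <= mdeg mu)%N) q p) => //.
by move=> a b _ hb; rewrite mdegD (leq_trans hb) // leq_addl.
Qed.

Lemma hi_mulr p q : hi p -> hi (p * q).
Proof. by move=> hp; rewrite mulrC; apply: hi_mull. Qed.

Lemma hi_low p mu : hi p -> (mdeg mu < N)%N -> p@_mu = 0.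
Proof.
move=> hp lt; apply/eqP; apply: contraTT lt => /hp.
by rewrite -leqNgt.
Qed.

Lemma geom (x : MP) : (1 - x) * Gs x = 1 - x ^+ N.
Proof. by rewrite /Gs -[1 - x ^+ N]opprB subrX1 -mulNr opprB. Qed.

Lemma mdeg_mA (i j : 'I_n) : (i < j)%N -> (0 < mdeg (mA i j))%N.
Proof.
move=> ij; rewrite mdegE (bigD1 i) //= mnmE leqnn ij /=.
by rewrite addnC ltn_addl.
Qed.

Lemma hi_XN mu : (0 < mdeg mu)%N -> hi ('X_[mu] ^+ N).
Proof.
move=> h; rewrite mpolyXn; apply: suppX.
by rewrite mdegMn -{1}(mul1n N) leq_mul2r h orbT.
Qed.

Definition psi2 (i j : 'I_n) : MP := TT i * TT j + Pp (TT i) * Gs 'X_[mA i j].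
Lemma psiE v : psi v = psi2 (src v) (snk v). Proof. by []. Qed.

Lemma mA_split (i j l : 'I_n) : (i <= j)%N -> (j <= l)%N -> mA i l = (mA i j + mA j l)%MM.
Proof.
move=> ij jl; apply/mnmP => w; rewrite mnmDE !mnmE.
case: (ltnP w j) => wj; rewrite ?andbT ?andbF.
  by rewrite (leq_trans wj jl) andbT addn0.
by rewrite (leq_trans ij wj) /= add0n.
Qed.

Lemma E_hi (i j l : 'I_n) : (i < j)%N -> (j < l)%N ->
  hi (psi2 i j * psi2 j l - psi2 i l * psi2 i j - psi2 i l * psi2 j l * 'X_[mA j l]
      - beta%:MP * psi2 i l * TT j - alpha%:MP * (TT j * TT l)).
Proof.
move=> hij hjl.
have hil : (i < l)%N by apply: ltn_trans hjl.
have eTj : TT j = 'X_[mA j l] * TT l by rewrite /TT (mT_split _ _ (ltnW hjl)) mpolyXD.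
have eTi : TT i = 'X_[mA i j] * 'X_[mA j l] * TT l.
  by rewrite /TT (mT_split _ _ (ltnW hij)) mpolyXD -/(TT j) eTj mulrA.
have eAil : 'X_[mA i l] = 'X_[mA i j] * 'X_[mA j l] :> MP.
  by rewrite (mA_split _ _ _ (ltnW hij) (ltnW hjl)) mpolyXD.
apply: (@key_abs _ hi (@suppD _) (@suppN _) (@hi_mull) 'X_[mA i j] 'X_[mA j l] (TT l)
  beta%:MP alpha%:MP (Gs 'X_[mA i j]) (Gs 'X_[mA j l]) (Gs 'X_[mA i l])
  ('X_[mA i j] ^+ N) ('X_[mA j l] ^+ N) ('X_[mA i l] ^+ N) (TT i) (TT j) (TT l)).
- exact: geom.
- exact: geom.
- by rewrite -eAil geom.
- exact/hi_XN/mdeg_mA.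
- exact/hi_XN/mdeg_mA.
- exact/hi_XN/mdeg_mA.
- exact: eTi.
- exact: eTj.
- by [].
- by [].
- by [].
- by [].
Qed.

Lemma Lam_gen (u : tmon n) (mh : mon n) (i j l : 'I_n)
  (hij : (i < j)%N) (hjl : (j < l)%N) (hil : (i < l)%N) :
  (mdeg (mU u + (mW mh + (mT j + mT l)))%MM < N)%N ->
  Lin (fun b2 => Lam u (monM mh b2)) (genJ beta alpha i j l) = 0.
Proof.
move=> hdeg; rewrite (@Lin_genJ _ _ _ _ _ _ _ _ hij hjl hil) /Lam !Psi_monM !mW_monM !Psi_monX !mW_monX Psi_mon1 mW_mon1.
rewrite !psiE /src /snk /=.
set M := (mU u + (mW mh + (mT j + mT l)))%MM.
have sp := mT_split _ _ (ltnW hjl).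
have e2 : (mU u + (mW mh + (mT l + mT j)))%MM = M by rewrite /M (addmC (mT l)).
have e3 : M = (mA j l + (mU u + (mW mh + (mT l + mT l))))%MM.
  by apply/mnmP => w; rewrite /M sp !mnmDE; lia.
have e4 : M = (mT j + (mU u + (mW mh + (mT l + 0))))%MM.
  by apply/mnmP => w; rewrite /M !mnmDE mnm0E; lia.
have e5 : M = ((mT j + mT l) + (mU u + (mW mh + 0)))%MM.
  by apply/mnmP => w; rewrite /M !mnmDE mnm0E; lia.
have c3 : (Psi mh * (psi2 i l * psi2 j l))@_(mU u + (mW mh + (mT l + mT l)))%MM
    = (Psi mh * (psi2 i l * psi2 j l * 'X_[mA j l]))@_M.
  by rewrite e3 !mulrA mcoeffMX.
have c4 : (Psi mh * (psi2 i l * 1))@_(mU u + (mW mh + (mT l + 0)))%MM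
    = (Psi mh * (psi2 i l * TT j))@_M.
  by rewrite e4 mulr1 mulrA mcoeffMX.
have c5 : (Psi mh * 1)@_(mU u + (mW mh + 0))%MM = (Psi mh * (TT j * TT l))@_M.
  by rewrite e5 /TT -mpolyXD mulr1 mcoeffMX.
rewrite e2 c3 c4 c5.
have bb : forall (c : k) (X : MP), (Psi mh * (c%:MP * X))@_M = c * (Psi mh * X)@_M.
  by move=> c X; rewrite mulrCA mcoeffCM.
rewrite -!bb -!mcoeffB -!mulrBr.
apply: hi_low => //; apply: hi_mull.
by rewrite (mulrA beta%:MP); apply: E_hi.
Qed.

Lemma mU_E u (w : 'I_n) : mU u w = (\sum_(a : 'I_n.-1) ((a <= w)%N : nat) * u a)%N.
Proof. by rewrite /mU mnm_sumE; apply: eq_bigr => a _; rewrite mulmnE mnmE mulnC. Qed.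

Lemma mU_inj u1 u2 : mU u1 = mU u2 -> u1 = u2.
Proof.
move=> E; apply/ffunP => a.
suff H : forall i (hi : (i < n.-1)%N), u1 (Ordinal hi) = u2 (Ordinal hi).
  by case: a => i hi; apply: H.
elim/ltn_ind => i IH hi.
have hw : (i < n)%N by apply: leq_trans hi (leq_pred n).
have sp : forall uu : tmon n, (\sum_(a : 'I_n.-1) ((a <= Ordinal hw)%N : nat) * uu a)%N
    = (uu (Ordinal hi) + \sum_(a : 'I_n.-1 | (a < i)%N) uu a)%N.
  move=> uu; rewrite (bigD1 (Ordinal hi)) //= leqnn mul1n; congr (_ + _).
  rewrite big_mkcond /= [RHS]big_mkcond /=; apply: eq_bigr => b _.
  have -> : (b != Ordinal hi) = (val b != i) by [].
  by case: (ltngtP b i) => h; rewrite ?mul1n ?mul0n //= ?(leqNgt b i) ?h.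
have := congr1 (fun mu : 'X_{1..n} => mu (Ordinal hw)) E; rewrite /= !mU_E !sp.
have -> : (\sum_(a : 'I_n.-1 | (a < i)%N) u1 a = \sum_(a : 'I_n.-1 | (a < i)%N) u2 a)%N.
  by apply: eq_bigr => b hb; case: b hb => b hb /= hbi; apply: IH.
by move/addIn.
Qed.

Lemma srcP v : (src v < n.-1)%N.
Proof. have := src_snk v; have := ltn_ord (snk v); lia. Qed.

Lemma mU_D (m : mon n) : (\sum_v (mT (src v) *+ m v))%MM = mU (Dmon m).
Proof.
apply/mnmP => w; rewrite mU_E mnm_sumE.
under eq_bigr do rewrite mulmnE mnmE.
rewrite (partition_big (fun v => Ordinal (srcP v)) xpredT) //=.
apply: eq_bigr => a _; rewrite /Dmon ffunE big_distrr /=.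
apply: eq_big => v; first by [].
by move=> /eqP <- /=; rewrite mulnC.
Qed.

Definition degM (m : mon n) : nat := (\sum_v m v)%N.

Lemma mdeg_mT v : (mdeg (mT v) <= n)%N.
Proof.
rewrite mdegE -[X in (_ <= X)%N](card_ord n) -sum1_card.
by apply: leq_sum => w _; rewrite mnmE leq_b1.
Qed.

Lemma mdeg_mW m : (mdeg (mW m) <= n * degM m)%N.
Proof.
rewrite /mW mdeg_sum /degM big_distrr /=; apply: leq_sum => v _.
by rewrite mdegMn leq_mul2r mdeg_mT orbT.
Qed.

Section Omega.
Variable m : mon n.

Definition isSink (r : 'I_n) : bool := [exists v : var n, (0 < m v)%N && (snk v == r)].
Definition prevc (mu : 'X_{1..n}) (r : 'I_n) : nat :=
  if val r is r'.+1 then mu (insubd r r') else 0%N.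
Definition om (mu : 'X_{1..n}) : int :=
  \sum_(r | isSink r) ((prevc mu r)%:Z - (mu r)%:Z).

Lemma prevcD mu1 mu2 r : prevc (mu1 + mu2)%MM r = (prevc mu1 r + prevc mu2 r)%N.
Proof. by rewrite /prevc; case: (val r) => [|r'] //; rewrite mnmDE. Qed.

Lemma prevcMn mu c r : prevc (mu *+ c)%MM r = (prevc mu r * c)%N.
Proof. by rewrite /prevc; case: (val r) => [|r'] //; rewrite mulmnE. Qed.

Lemma omD mu1 mu2 : om (mu1 + mu2)%MM = om mu1 + om mu2.
Proof.
rewrite /om -big_split /=; apply: eq_bigr => r _.
rewrite prevcD mnmDE !PoszD; ring.
Qed.

Lemma om0 : om 0%MM = 0.
Proof. by rewrite /om big1 // => r _; rewrite /prevc mnm0E; case: (val r) => [|r'] //; rewrite mnm0E. Qed.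

Lemma omMn mu c : om (mu *+ c)%MM = om mu * c%:Z.
Proof.
rewrite /om mulr_suml; apply: eq_bigr => r _.
by rewrite prevcMn mulmnE !PoszM mulrBl.
Qed.

Lemma om_mT v : om (mT v) = - (isSink v)%:Z.
Proof.
rewrite /om (eq_bigr (fun r => - ((r == v) : nat)%:Z)); last first.
  move=> r _; rewrite /prevc mnmE; case: r => [[|r'] hr] /=.
    have -> : (Ordinal hr == v) = (0 == v :> nat)%N by [].
    by rewrite sub0r leqn0 eq_sym.
  rewrite mnmE insubdK; last exact: (ltn_trans (ltnSn r') hr).
  have -> : ((Ordinal hr) == v) = (r'.+1 == v) by [].
  case: (ltngtP v r'.+1) => h.
  - by rewrite -ltnS h subrr.
  - by rewrite leqNgt (ltn_trans (ltnSn r') h).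
  - by rewrite h ltnn.
rewrite sumrN; congr (- _).
case: (boolP (isSink v)) => sv.
  rewrite (bigD1 v) //= eqxx big1 ?addr0 // => r /andP [_ /negbTE ->] //.
rewrite big1 // => r sr; case: eqP => // rv; by move: sv; rewrite -rv sr.
Qed.

Definition Good (c : int) (p : MP) (mu0 : 'X_{1..n}) :=
  om mu0 = c /\ supp (fun mu => c + 1 <= om mu) (p - 'X_[mu0]).

Lemma Good1 : Good 0 1 0%MM.
Proof. by split; [exact: om0 | rewrite mpolyX0 subrr; apply: supp0]. Qed.

Lemma GoodM c1 c2 p q mu1 mu2 :
  Good c1 p mu1 -> Good c2 q mu2 -> Good (c1 + c2) (p * q) (mu1 + mu2)%MM.
Proof.
move=> [o1 s1] [o2 s2]; split; first by rewrite omD o1 o2.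
have -> : p * q - 'X_[mu1 + mu2] = (p - 'X_[mu1]) * (q - 'X_[mu2])
    + (p - 'X_[mu1]) * 'X_[mu2] + 'X_[mu1] * (q - 'X_[mu2]) by rewrite mpolyXD; ring.
apply: suppD; [apply: suppD|].
- apply: (@suppM _ _ _ _ _ _ s1 s2) => a b ha hb; rewrite omD; lia.
- apply: (@suppM _ _ _ _ _ _ s1 (@suppX (fun mu => om mu = c2) _ o2)) => a b ha hb; rewrite omD; lia.
- apply: (@suppM _ _ _ _ _ _ (@suppX (fun mu => om mu = c1) _ o1) s2) => a b ha hb; rewrite omD; lia.
Qed.

Lemma GoodX c p mu e : Good c p mu -> Good (c * e%:Z) (p ^+ e) (mu *+ e)%MM.
Proof.
move=> g; elim: e => [|e IH]; first by rewrite mulr0 expr0 mulm0n; exact: Good1.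
by rewrite exprSr mulmSr -addn1 PoszD mulrDr mulr1; apply: GoodM.
Qed.

Lemma GoodP (F : var n -> MP) (c : var n -> int) (mu : var n -> 'X_{1..n}) :
  (forall v, Good (c v) (F v) (mu v)) ->
  Good (\sum_v c v) (\prod_v F v) (\sum_v mu v)%MM.
Proof.
move=> h; apply: (big_rec3 (fun a b d => Good a b d)); first exact: Good1.
by move=> v y1 y2 y3 _ g; apply: GoodM.
Qed.

Hypothesis Hpl : pathless_mon m.

Lemma expo_var w : expo m (src w) (snk w) = m w.
Proof. by rewrite /expo /src /snk -surjective_pairing valK. Qed.

Lemma isSink_snk v : (0 < m v)%N -> isSink (snk v).
Proof. by move=> h; apply/existsP; exists v; rewrite h eqxx. Qed.

Lemma notSink_src v : (0 < m v)%N -> ~~ isSink (src v).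
Proof.
move=> h; apply/negP => /existsP [w /andP [hw /eqP sw]].
apply: (Hpl (src w) (src v) (snk v)).
- by rewrite -sw; apply: src_snk.
- exact: src_snk.
- by split; [rewrite -sw expo_var | rewrite expo_var].
Qed.

Lemma om_mA (s r : 'I_n) : (s <= r)%N -> om (mA s r) = om (mT s) - om (mT r).
Proof. by move=> sr; rewrite (mT_split _ _ sr) omD addrK. Qed.

Lemma PosM p q : supp (fun mu => 0 <= om mu) p -> supp (fun mu => 0 <= om mu) q ->
  supp (fun mu => 0 <= om mu) (p * q).
Proof. by apply: suppM => a b ha hb; rewrite omD addr_ge0. Qed.

Lemma Good_psi v : (0 < m v)%N -> Good (-1) (psi v) (mT (src v) + mT (snk v))%MM.
Proof.
move=> h; split.
  by rewrite omD !om_mT (negbTE (notSink_src _ h)) (isSink_snk _ h).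
have -> : psi v - 'X_[mT (src v) + mT (snk v)] = Pp (TT (src v)) * Gs 'X_[mA (src v) (snk v)].
  by rewrite psiE /psi2 mpolyXD /TT; ring.
apply: (@suppS (fun mu => 0 <= om mu)); first by move=> mu; rewrite addNr.
have hT : supp (fun mu => 0 <= om mu) (TT (src v)).
  by apply: suppX; rewrite om_mT (negbTE (notSink_src _ h)) oppr0.
have hC : forall c : k, supp (fun mu => 0 <= om mu) c%:MP.
  by move=> c; apply: suppC; rewrite om0.
apply: PosM.
  by rewrite /Pp; apply: suppD; [apply: suppD|]; rewrite //; apply: PosM.
apply: supp_sum => e _; rewrite mpolyXn; apply: suppX.
rewrite omMn om_mA ?(ltnW (src_snk v)) // !om_mT (negbTE (notSink_src _ h)) (isSink_snk _ h).
by rewrite oppr0 sub0r opprK mul1r.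
Qed.

Lemma Good_pow v : Good (- (m v)%:Z) (psi v ^+ m v) ((mT (src v) + mT (snk v)) *+ m v)%MM.
Proof.
case: (posnP (m v)) => h.
  by rewrite h expr0 mulm0n oppr0; exact: Good1.
by have := GoodX _ _ _ (m v) (Good_psi _ h); rewrite mulN1r.
Qed.

Lemma om_mW : om (mW m) = \sum_v - (m v)%:Z.
Proof.
rewrite /mW (big_morph om omD om0); apply: eq_bigr => v _.
rewrite omMn om_mT; case: (posnP (m v)) => h; first by rewrite h mulr0 oppr0.
by rewrite (isSink_snk _ h) mulN1r.
Qed.

Lemma om_mU u : om (mU u) <= 0.
Proof.
rewrite /mU (big_morph om omD om0); apply: sumr_le0 => a _.
by rewrite omMn om_mT mulNr oppr_le0.
Qed.

Lemma Lam_pl u : Lam u m = (Dmon m == u)%:R.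
Proof.
have [o sg] := @GoodP (fun v => psi v ^+ m v) (fun v => - (m v)%:Z)
  (fun v => ((mT (src v) + mT (snk v)) *+ m v)%MM) Good_pow.
rewrite /Lam -/(Psi m) in sg *.
set mu0 := (\sum_v ((mT (src v) + mT (snk v)) *+ m v))%MM in o sg *.
rewrite -[Psi m](subrK 'X_[mu0]) mcoeffD.
have -> : (Psi m - 'X_[mu0])@_(mU u + mW m)%MM = 0.
  apply/eqP; case: eqP => // /eqP /sg.
  rewrite omD om_mW; have := om_mU u; move: (\sum_v - (m v)%:Z) (om (mU u)) => S x h1 h2.
  lia.
rewrite add0r mcoeffX.
have -> : mu0 = (\sum_v (mT (src v) *+ m v) + mW m)%MM.
  apply/mnmP => w; rewrite /mu0 mnmDE /mW !mnm_sumE -big_split /=.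
  by apply: eq_bigr => v _; rewrite !mulmnE mnmDE mulnDl.
rewrite eqm_add2r mU_D.
have -> : (mU (Dmon m) == mU u) = (Dmon m == u).
  by apply/eqP/eqP => [/mU_inj|->].
by [].
Qed.

End Omega.

End Model.
Arguments degM {n}.
Arguments mU {n}.
Arguments mW {n}.
Arguments mT {n}.
Arguments Lam {k} beta alpha {n} N u m.

Lemma mem_le_sum (T : eqType) (r : seq T) (F : T -> nat) x :
  x \in r -> (F x <= \sum_(y <- r) F y)%N.
Proof.
elim: r => //= y r IH; rewrite inE big_cons => /orP [/eqP ->|/IH h].
  exact: leq_addr.
exact: leq_trans h (leq_addl _ _).
Qed.

Definition Bnd (k : comPzRingType) n (s : seq (xpoly k n * ('I_n * 'I_n * 'I_n))) : nat :=
  (\sum_(t <- s) \sum_(a <- t.1) degM a.2)%N.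
Arguments Bnd {k n}.

Lemma Lam_ideal (k : comNzRingType) (beta alpha : k) (n N : nat) (u : tmon n)
  (s : seq (xpoly k n * ('I_n * 'I_n * 'I_n))) :
  all (fun t : xpoly k n * ('I_n * 'I_n * 'I_n) => (t.2.1.1 < t.2.1.2)%N && (t.2.1.2 < t.2.2)%N) s ->
  (mdeg (mU u) + n * Bnd s + 2 * n < N)%N ->
  Lin (Lam beta alpha N u)
    (flatten [seq pMul t.1 (genJ beta alpha t.2.1.1 t.2.1.2 t.2.2) | t <- s]) = 0.
Proof.
move=> /allP hs hN; rewrite Lin_flatten big_map big1_seq // => t ts.
have /andP [hij hjl] := hs t ts.
rewrite Lin_mul big1_seq // => a ats.
rewrite (_ : \sum_(b <- _) _ = Lin (fun b2 => Lam beta alpha N u (monM a.2 b2))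
   (genJ beta alpha t.2.1.1 t.2.1.2 t.2.2)) //.
rewrite (Lam_gen _ _ _ _ _ _ _ _ _ _ hij hjl (ltn_trans hij hjl)) ?mulr0 //.
rewrite !mdegD; apply: leq_ltn_trans hN.
have h1 : (degM a.2 <= Bnd s)%N.
  have hA := @mem_le_sum _ _ (fun a : k * mon n => degM a.2) _ ats.
  have hB := @mem_le_sum _ _ (fun t : xpoly k n * ('I_n * 'I_n * 'I_n) => \sum_(a <- t.1) degM a.2)%N _ ts.
  exact: (leq_trans hA hB).
have h2 := mdeg_mW _ a.2.
have h3 := mdeg_mT _ t.2.1.2.
have h4 := mdeg_mT _ t.2.2.
have h5 : (n * degM a.2 <= n * Bnd s)%N by rewrite leq_mul2l h1 orbT.
rewrite -addnA leq_add2l mul2n -addnn.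
by apply: leq_add; [exact: leq_trans h2 h5 | exact: leq_add].
Qed.

Theorem main_nz (k : comNzRingType) (beta alpha : k) (n : nat) (p q1 q2 : xpoly k n) :
  pathless q1 -> pathless q2 ->
  congJ beta alpha p q1 -> congJ beta alpha p q2 ->
  forall u : tmon n, pcoef (Dpoly q1) u = pcoef (Dpoly q2) u.
Proof.
move=> pl1 pl2 [s1 [hs1 e1]] [s2 [hs2 e2]] u.
set N := (mdeg (mU u) + n * (Bnd s1 + Bnd s2) + 2 * n).+1.
have L1 : Lin (Lam beta alpha N u) (pSub p q1) = 0.
  rewrite (@Lin_eq _ _ _ _ _ e1) Lam_ideal // /N ltnS leq_add2r leq_add2l.
  by rewrite leq_mul2l leq_addr orbT.
have L2 : Lin (Lam beta alpha N u) (pSub p q2) = 0.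
  rewrite (@Lin_eq _ _ _ _ _ e2) Lam_ideal // /N ltnS leq_add2r leq_add2l.
  by rewrite leq_mul2l leq_addl orbT.
have P1 : pcoef (Dpoly q1) u = Lin (Lam beta alpha N u) q1.
  rewrite pcoef_Dpoly; apply: Lin_pathless => // m hm.
  by rewrite (Lam_pl _ _ _ _ _ _ hm).
have P2 : pcoef (Dpoly q2) u = Lin (Lam beta alpha N u) q2.
  rewrite pcoef_Dpoly; apply: Lin_pathless => // m hm.
  by rewrite (Lam_pl _ _ _ _ _ _ hm).
rewrite P1 P2; rewrite Lin_sub in L1; rewrite Lin_sub in L2.
by move/eqP: L1; rewrite subr_eq0 => /eqP <-; move/eqP: L2; rewrite subr_eq0 => /eqP <-.
Qed.

Section Alias.
Variable k : comPzRingType.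
Hypothesis k1 : (1 : k) != 0.
Definition kk : Type := k.
HB.instance Definition _ := GRing.ComPzRing.on kk.
HB.instance Definition _ := GRing.PzSemiRing_isNonZero.Build kk k1.

Lemma main_alias (beta alpha : k) (n : nat) (p q1 q2 : xpoly k n) :
  pathless q1 -> pathless q2 ->
  congJ beta alpha p q1 -> congJ beta alpha p q2 ->
  forall u : tmon n, pcoef (Dpoly q1) u = pcoef (Dpoly q2) u.
Proof. exact: (@main_nz kk beta alpha n p q1 q2). Qed.
End Alias.

Theorem theorem2p7 (k : comPzRingType) (beta alpha : k) (n : nat) (Hn : (0 < n)%N)
  (p q1 q2 : xpoly k n) :
  pathless q1 -> pathless q2 ->
  congJ beta alpha p q1 -> congJ beta alpha p q2 ->
  forall u : tmon n, pcoef (Dpoly q1) u = pcoef (Dpoly q2) u.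
Proof.
have [z|nz] := eqVneq (1 : k) 0; last exact: main_alias.
move=> _ _ _ _ u.
have all0 : forall x : k, x = 0 by move=> x; rewrite -[x]mulr1 z mulr0.
by rewrite (all0 (pcoef _ u)) (all0 (pcoef (Dpoly q2) u)).
Qed.
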